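(* Let $n,m\ge1$, $c_1,\dots,c_n>0$, $T>0$, $\epsilon>0$, $\kappa_{ij}\ge0$, $\bar r_1,\dots,\bar r_m>0$ and $R=\prod_{i=1}^m[0,\bar r_i]$. For $r\in R$ let $$C(X,q,r)=\sum_{i,j}\kappa_{ij}x_{ij}+\sum_j\beta_j(q_j)+\epsilon\sum_{i,j}x_{ij}\log\Big(\frac{x_{ij}}{r_i}\Big),$$ where $\beta_j(q_j)=0$ for $q_j\le c_j$ and $\beta_j(q_j)=q_j-c_j-c_j\log(q_j/c_j)$ for $q_j>c_j$, and let $\mathcal{C}(r)$ be the minimum of $C(X,q,r)$ over $(X,q)\in\mathbb{R}^{m\times n}\times\mathbb{R}^n$ satisfying $x_{ij}\ge0$, $\sum_jx_{ij}=r_i$ for all $i$, and $\sum_ix_{ij}=q_j/T$ for all $j$. Then $\mathcal{C}$ is convex on $R$.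
   Context: Conventions: $0\log0=0$ and terms with $x_{ij}=0$ (in particular all terms with $r_i=0$, which force $x_{ij}=0$) contribute zero to the entropy term; equivalently the entropy term is $\epsilon\sum_i r_i\sum_j\delta_{ij}\log\delta_{ij}$ with $\delta_{ij}=x_{ij}/r_i$. *)

(* Defs.v *)
From mathcomp Require Import all_boot all_order all_algebra.
From mathcomp Require Import all_classical all_reals all_analysis.
Import Order.TTheory GRing.Theory Num.Theory.
Local Open Scope ring_scope.
Local Open Scope classical_set_scope.

Definition beta {R : realType} (c q : R) : R :=
  if q <= c then 0 else q - c - c * ln (q / c).

Definition xlogxr {R : realType} (x r : R) : R :=
  if x == 0 then 0 else x * ln (x / r).

Definition cost {R : realType} {m n : nat} (kappa : 'M[R]_(m, n))
  (c : 'I_n -> R) (eps : R) (X : 'M[R]_(m, n)) (q : 'I_n -> R)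
  (r : 'I_m -> R) : R :=
  \sum_(i < m) \sum_(j < n) kappa i j * X i j
  + \sum_(j < n) beta (c j) (q j)
  + eps * \sum_(i < m) \sum_(j < n) xlogxr (X i j) (r i).

Definition feasible {R : realType} {m n : nat} (T : R)
  (X : 'M[R]_(m, n)) (q : 'I_n -> R) (r : 'I_m -> R) : Prop :=
  (forall i j, 0 <= X i j) /\
  (forall i, \sum_(j < n) X i j = r i) /\
  (forall j, \sum_(i < m) X i j = q j / T).

(* \mathcal C(r): the minimum (= infimum, which is attained) of C over the
   feasible set *)
Definition optcost {R : realType} {m n : nat} (kappa : 'M[R]_(m, n))
  (c : 'I_n -> R) (T eps : R) (r : 'I_m -> R) : R :=
  inf [set v | exists (X : 'M[R]_(m, n)) (q : 'I_n -> R),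
                 @feasible R m n T X q r /\ v = @cost R m n kappa c eps X q r].

Definition inbox {R : realType} {m : nat} (rbar : 'I_m -> R) (r : 'I_m -> R) : Prop :=
  forall i, 0 <= r i <= rbar i.

(* Main.v *)
Require Import Defs.
From mathcomp Require Import all_boot all_order all_algebra.
From mathcomp Require Import all_classical all_reals all_analysis.
From mathcomp Require Import ring lra.
Import Order.TTheory GRing.Theory Num.Theory.
Local Open Scope ring_scope.
Local Open Scope classical_set_scope.

Section Helpers.
Variable R : realType.

Lemma ln_le_sub1 (u : R) : 0 < u -> ln u <= u - 1.
Proof.
move=> u0; have := @le_ln1Dx R (u - 1).
have -> : 1 + (u - 1) = u by ring.
by apply; lra.
Qed.

Lemma lnD_le (x y : R) : 0 < x -> 0 < y -> ln x - ln y <= x / y - 1.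
Proof.
move=> x0 y0; rewrite -ln_div ?posrE //; apply: ln_le_sub1.
exact: divr_gt0.
Qed.

Lemma xlogxr_lb (x r : R) : 0 <= x -> x <= r -> - r <= xlogxr x r.
Proof.
move=> x0 xr; rewrite /xlogxr; case: eqP => [_|/eqP xn0]; first lra.
have xp : 0 < x by rewrite lt_neqAle eq_sym xn0.
have rp : 0 < r by apply: lt_le_trans xr.
rewrite ln_div ?posrE //.
have := @lnD_le r x rp xp.
have -> : r / x - 1 = (r - x) / x by field; lra.
move=> h.
have : x * (ln r - ln x) <= r - x.
  by rewrite -(@ler_pM2l _ (x^-1)) ?invr_gt0 // mulrA mulVf ?mul1r 1?mulrC //; lra.
lra.
Qed.

Lemma xlog_piece (a b A B : R) : 0 <= a -> a <= b -> 0 < A -> 0 < B ->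
  a * (ln A - ln B) + a - b * (A / B) <= xlogxr a b.
Proof.
move=> a0 ab A0 B0; rewrite /xlogxr; case: eqP => [->|/eqP an0].
  have : 0 <= b * (A / B) by apply: mulr_ge0; [lra| apply: divr_ge0; lra].
  lra.
have ap : 0 < a by rewrite lt_neqAle eq_sym an0.
have bp : 0 < b by apply: lt_le_trans ab.
rewrite ln_div ?posrE //.
have h := @lnD_le (b * A) (a * B) (mulr_gt0 bp A0) (mulr_gt0 ap B0).
rewrite !lnM ?posrE // in h.
have e : b * A / (a * B) - 1 = (b * (A / B) - a) / a by field; lra.
rewrite e in h.
have : a * (ln b + ln A - (ln a + ln B)) <= b * (A / B) - a.
  rewrite -(@ler_pM2l _ (a^-1)) ?invr_gt0 //.
  have -> : a^-1 * (a * (ln b + ln A - (ln a + ln B))) = ln b + ln A - (ln a + ln B) by field; lra.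
  by rewrite mulrC.
lra.
Qed.

Lemma xlog_subadd (a1 b1 a2 b2 : R) : 0 <= a1 -> a1 <= b1 -> 0 <= a2 -> a2 <= b2 ->
  xlogxr (a1 + a2) (b1 + b2) <= xlogxr a1 b1 + xlogxr a2 b2.
Proof.
move=> a10 ab1 a20 ab2.
have [A0|Ap] : a1 + a2 = 0 \/ 0 < a1 + a2.
  by case: (ltrgtP (a1 + a2) 0) => h; [lra|right|left].
  have e1 : a1 = 0 by lra.
  have e2 : a2 = 0 by lra.
  by rewrite A0 e1 e2 /xlogxr eqxx addr0.
have Bp : 0 < b1 + b2 by lra.
have h1 := @xlog_piece a1 b1 (a1 + a2) (b1 + b2) a10 ab1 Ap Bp.
have h2 := @xlog_piece a2 b2 (a1 + a2) (b1 + b2) a20 ab2 Ap Bp.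
have e : b1 * ((a1 + a2) / (b1 + b2)) + b2 * ((a1 + a2) / (b1 + b2)) = a1 + a2.
  by field; lra.
rewrite {1}/xlogxr gt_eqF // ln_div ?posrE //.
lra.
Qed.

Lemma xlog_scale (t x r : R) : 0 <= t -> xlogxr (t * x) (t * r) = t * xlogxr x r.
Proof.
move=> t0; rewrite /xlogxr.
have [->|tp] : t = 0 \/ 0 < t by case: (ltrgtP t 0) => h; [lra|right|left].
  by rewrite mul0r eqxx mul0r.
rewrite mulf_eq0 gt_eqF //=; case: eqP => _; first by rewrite mulr0.
have -> : t * x / (t * r) = x / r.
  by rewrite invfM mulrACA mulfV ?gt_eqF // mul1r.
by rewrite mulrA.
Qed.

Lemma beta_ge0 (c q : R) : 0 < c -> 0 <= beta c q.
Proof.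
move=> c0; rewrite /beta; case: (lerP q c) => // cq.
have qp : 0 < q by exact: lt_trans c0 cq.
have h := @lnD_le q c qp c0.
have := ler_wpM2l (ltW c0) h.
rewrite ln_div ?posrE //.
have -> : c * (q / c - 1) = q - c by field; lra.
lra.
Qed.

Definition bslope (c z : R) : R := if z <= c then 0 else 1 - c / z.

Lemma beta_support (c z y : R) : 0 < c ->
  beta c z + bslope c z * (y - z) <= beta c y.
Proof.
move=> c0; rewrite /bslope {1}/beta; case: (lerP z c) => zc.
  by rewrite mul0r addr0; apply: beta_ge0.
have zp : 0 < z by exact: lt_trans c0 zc.
rewrite ln_div ?posrE //.
have e : z - c - c * (ln z - ln c) + (1 - c / z) * (y - z) =
   y - c * ln z + c * ln c - c * (y / z) by field; lra.
rewrite e /beta; case: (lerP y c) => yc.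
  have h := ler_wpM2l (ltW c0) (@lnD_le c z c0 zp).
  have h2 : 0 <= (c - y) * (1 - c / z).
    apply: mulr_ge0; first lra.
    rewrite subr_ge0 ler_pdivrMr // mul1r; lra.
  have e2 : c * (c / z - 1) = c * (c / z) - c by ring.
  have e3 : (c - y) * (1 - c / z) = c - c * (c / z) - y + c * (y / z) by ring.
  lra.
have yp : 0 < y by exact: lt_trans c0 yc.
rewrite ln_div ?posrE //.
have h := ler_wpM2l (ltW c0) (@lnD_le y z yp zp).
have e2 : c * (y / z - 1) = c * (y / z) - c by ring.
lra.
Qed.

Lemma beta_convex (c q1 q2 t : R) : 0 < c -> 0 <= t <= 1 ->
  beta c (t * q1 + (1 - t) * q2) <= t * beta c q1 + (1 - t) * beta c q2.
Proof.
move=> c0 /andP[t0 t1].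
set z := t * q1 + (1 - t) * q2.
have h1 := ler_wpM2l t0 (@beta_support c z q1 c0).
have h2 := ler_wpM2l (_ : 0 <= 1 - t) (@beta_support c z q2 c0).
have : 0 <= 1 - t by lra.
move=> /h2 {}h2.
have e : t * (beta c z + bslope c z * (q1 - z)) +
  (1 - t) * (beta c z + bslope c z * (q2 - z)) = beta c z.
  by rewrite /z; ring.
lra.
Qed.
End Helpers.

Section Main.
Variables (R : realType) (n m : nat) (c : 'I_n -> R) (T eps : R)
  (kappa : 'M[R]_(m, n)).
Hypotheses (hc : forall j, 0 < c j) (hT : 0 < T) (heps : 0 < eps)
  (hkappa : forall i j, 0 <= kappa i j).

Lemma feas_le (X : 'M[R]_(m, n)) q r i j : feasible T X q r -> X i j <= r i.
Proof.
move=> [h0 [hr _]]; rewrite -hr (bigD1 j) //= lerDl.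
by apply: sumr_ge0 => k _.
Qed.

Lemma cost_lb (X : 'M[R]_(m, n)) q r : feasible T X q r ->
  eps * \sum_(i < m) \sum_(j < n) (- r i) <= cost kappa c eps X q r.
Proof.
move=> hf; have [h0 _] := hf; rewrite /cost.
have hK : 0 <= \sum_(i < m) \sum_(j < n) kappa i j * X i j.
  by apply: sumr_ge0 => i _; apply: sumr_ge0 => j _; apply: mulr_ge0.
have hB : 0 <= \sum_(j < n) beta (c j) (q j).
  by apply: sumr_ge0 => j _; apply: beta_ge0.
have hE : \sum_(i < m) \sum_(j < n) (- r i) <=
          \sum_(i < m) \sum_(j < n) xlogxr (X i j) (r i).
  apply: ler_sum => i _; apply: ler_sum => j _; apply: xlogxr_lb => //.
  exact: feas_le hf.
have := ler_wpM2l (ltW heps) hE.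
lra.
Qed.

Definition Sset r := [set v : R | exists (X : 'M[R]_(m, n)) (q : 'I_n -> R),
                 @feasible R m n T X q r /\ v = @cost R m n kappa c eps X q r].

Lemma Sset_lb r : has_lbound (Sset r).
Proof.
exists (eps * \sum_(i < m) \sum_(j < n) (- r i)); move=> v [X [q [hf ->]]].
exact: cost_lb.
Qed.

Lemma Sset_ne r : (1 <= n)%N -> (forall i, 0 <= r i) -> Sset r !=set0.
Proof.
move=> hn hr.
pose X := \matrix_(i < m, j < n) (r i / n%:R).
have n0 : (n%:R : R) != 0 by rewrite pnatr_eq0 -lt0n.
exists (cost kappa c eps X (fun j => T * \sum_(i < m) X i j) r).
exists X, (fun j => T * \sum_(i < m) X i j); split => //.
split; [|split].
- move=> i j; rewrite mxE; apply: divr_ge0 => //.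
- move=> i; under eq_bigr do rewrite mxE.
  by rewrite sumr_const card_ord -[_ *+ n]mulr_natr divfK.
- by move=> j; rewrite mulrAC divff ?mul1r // gt_eqF.
Qed.

Lemma cost_convex (X1 X2 : 'M[R]_(m, n)) q1 q2 r1 r2 t :
  feasible T X1 q1 r1 -> feasible T X2 q2 r2 -> 0 <= t <= 1 ->
  let Xt := \matrix_(i < m, j < n) (t * X1 i j + (1 - t) * X2 i j) in
  let qt := fun j => t * q1 j + (1 - t) * q2 j in
  let rt := fun i => t * r1 i + (1 - t) * r2 i in
  feasible T Xt qt rt /\
  cost kappa c eps Xt qt rt <=
    t * cost kappa c eps X1 q1 r1 + (1 - t) * cost kappa c eps X2 q2 r2.
Proof.
move=> hf1 hf2 ht Xt qt rt.
have [t0 t1] : 0 <= t /\ 0 <= 1 - t by move/andP: ht => [] *; split; lra.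
have [h10 [hr1 hq1]] := hf1; have [h20 [hr2 hq2]] := hf2.
split; [split; [|split]|].
- move=> i j; rewrite mxE; apply: addr_ge0; exact: mulr_ge0.
- move=> i; under eq_bigr do rewrite mxE.
  by rewrite big_split /= -!mulr_sumr hr1 hr2.
- move=> j; under eq_bigr do rewrite mxE.
  rewrite big_split /= -!mulr_sumr hq1 hq2 /qt.
  by rewrite [RHS]mulrDl !mulrA.
rewrite /cost.
have hK : \sum_(i < m) \sum_(j < n) kappa i j * Xt i j =
   t * \sum_(i < m) \sum_(j < n) kappa i j * X1 i j +
   (1 - t) * \sum_(i < m) \sum_(j < n) kappa i j * X2 i j.
  rewrite !mulr_sumr -big_split; apply: eq_bigr => i _.
  rewrite !mulr_sumr -big_split; apply: eq_bigr => j _.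
  rewrite mxE /=; ring.
have hB : \sum_(j < n) beta (c j) (qt j) <=
   t * \sum_(j < n) beta (c j) (q1 j) + (1 - t) * \sum_(j < n) beta (c j) (q2 j).
  rewrite !mulr_sumr -big_split; apply: ler_sum => j _.
  exact: beta_convex.
have hE : \sum_(i < m) \sum_(j < n) xlogxr (Xt i j) (rt i) <=
   t * \sum_(i < m) \sum_(j < n) xlogxr (X1 i j) (r1 i) +
   (1 - t) * \sum_(i < m) \sum_(j < n) xlogxr (X2 i j) (r2 i).
  rewrite !mulr_sumr -big_split; apply: ler_sum => i _.
  rewrite !mulr_sumr -big_split; apply: ler_sum => j _.
  rewrite mxE /rt -(@xlog_scale R t _ _ t0) -(@xlog_scale R (1 - t) _ _ t1).
  apply: xlog_subadd.
  + exact: mulr_ge0.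
  + apply: ler_wpM2l => //; exact: feas_le hf1.
  + exact: mulr_ge0.
  + apply: ler_wpM2l => //; exact: feas_le hf2.
have := ler_wpM2l (ltW heps) hE.
lra.
Qed.

End Main.

Theorem proposition4 (R : realType) (n m : nat) (hn : (1 <= n)%N) (hm : (1 <= m)%N)
  (c : 'I_n -> R) (hc : forall j, 0 < c j) (T : R) (hT : 0 < T)
  (eps : R) (heps : 0 < eps) (kappa : 'M[R]_(m, n))
  (hkappa : forall i j, 0 <= kappa i j)
  (rbar : 'I_m -> R) (hrbar : forall i, 0 < rbar i) :
  forall (r1 r2 : 'I_m -> R) (t : R),
    inbox rbar r1 -> inbox rbar r2 -> 0 <= t <= 1 ->
    optcost kappa c T eps (fun i => t * r1 i + (1 - t) * r2 i)
      <= t * optcost kappa c T eps r1 + (1 - t) * optcost kappa c T eps r2.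
Proof.
move=> r1 r2 t hb1 hb2 ht.
have [t0 t1] : 0 <= t /\ 0 <= 1 - t by move/andP: ht => [] *; split; lra.
have p1 : forall i, 0 <= r1 i by move=> i; case/andP: (hb1 i).
have p2 : forall i, 0 <= r2 i by move=> i; case/andP: (hb2 i).
apply/ler_addgt0Pr => d d0.
have [v1 [X1 [q1 [hf1 ->]]] hv1] := @inf_adherent R _ d d0
   (conj (@Sset_ne R n m c T eps kappa hT r1 hn p1) (@Sset_lb R n m c T eps kappa hc heps hkappa r1)).
have [v2 [X2 [q2 [hf2 ->]]] hv2] := @inf_adherent R _ d d0
   (conj (@Sset_ne R n m c T eps kappa hT r2 hn p2) (@Sset_lb R n m c T eps kappa hc heps hkappa r2)).
have [hf hc'] := @cost_convex R n m c T eps kappa hc heps _ _ _ _ _ _ t hf1 hf2 ht.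
have hinf : optcost kappa c T eps (fun i => t * r1 i + (1 - t) * r2 i) <=
    cost kappa c eps (\matrix_(i < m, j < n) (t * X1 i j + (1 - t) * X2 i j))
      (fun j => t * q1 j + (1 - t) * q2 j) (fun i => t * r1 i + (1 - t) * r2 i).
  apply: (ge_inf (@Sset_lb R n m c T eps kappa hc heps hkappa _)).
  by eexists; eexists; split; first exact: hf.
have a1 := ler_wpM2l t0 (ltW hv1).
have a2 := ler_wpM2l t1 (ltW hv2).
lra.
Qed.
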